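(* Let $K$ be a finite commutative ring, $G$ a group, $\alpha:G\times G\to U(K)$ a 2-cocycle, and $R=K^\alpha G$ the twisted group ring. Let $T_1,T_2\subseteq R$ be subsets such that any two elements of $T_1$ commute, and let $(-)^*:T_2\to R$ be a map satisfying $x\,y^*=y\,x^*$ for all $x,y\in T_2$. Let $L^1_1,\dots,L^1_{n_1}\in T_1$, $L^2_1,\dots,L^2_{n_2}\in T_2$, $h\in R$, $a,c\in T_1$ and $b,d\in T_2$. Suppose that integers $z_{ij}$ ($1\le i\le n_1$, $1\le j\le n_2$) satisfy \[ ahb=\sum_{i=1}^{n_1}\sum_{j=1}^{n_2} z_{ij}\,L^1_i\,h\,L^2_j. \] Then \[ \sum_{i=1}^{n_1}\sum_{j=1}^{n_2} z_{ij}\,L^1_i\,(chd)\,(L^2_j)^* \;=\; c\,a\,h\,b\,d^*. \]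
   Context: $U(K)$ is the group of units of $K$. A 2-cocycle is a map $\alpha:G\times G\to U(K)$ with $\alpha(g,1)=\alpha(1,g)=1$ and $\alpha(g,h)\alpha(gh,k)=\alpha(g,hk)\alpha(h,k)$ for all $g,h,k\in G$. The twisted group ring $K^\alpha G$ is the free $K$-module with basis $\{\overline g:g\in G\}$ and multiplication $(a\overline g)(b\overline h)=ab\,\alpha(g,h)\,\overline{gh}$ extended bilinearly. Integer coefficients $z_{ij}$ act by repeated addition (e.g. coefficients in the prime field $\mathbb{Z}_p$ when $R$ has characteristic $p$). This is used in the key exchange where Alice publishes $ahb$, Bob publishes $chd$, and the shared key is $a(chd)b^*=c(ahb)d^*$. *)

(* Defs.v *)
From HB Require Import structures.
From mathcomp Require Import all_boot all_order all_algebra.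
From mathcomp Require Import monoid.
From mathcomp Require Import finmap.
From mathcomp.multinomials Require Import monalg.

Set Implicit Arguments.
Unset Strict Implicit.
Unset Printing Implicit Defensive.

Import GRing.Theory.
Local Open Scope ring_scope.

Definition is_2cocycle (K : comNzRingType) (G : groupType)
    (alpha : G -> G -> K) : Prop :=
  [/\ forall g h, exists u : K, alpha g h * u = 1,
      forall g, alpha g 1%g = 1,
      forall g, alpha 1%g g = 1 &
      forall g h k, alpha g h * alpha (g * h)%g k = alpha g (h * k)%g * alpha h k].

(* Multiplication of the twisted group ring K^alpha G on the free K-module
   {malg K[G]} with basis G (the basis element gbar is << g >>):
   (a gbar)(b hbar) = a b alpha(g,h) (gh)bar, extended bilinearly. *)
Definition twisted_mul (K : comNzRingType) (G : groupType)
    (alpha : G -> G -> K) (x y : {malg K[G]}) : {malg K[G]} :=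
  \sum_(g <- msupp x) \sum_(h <- msupp y)
     << (x@_g * y@_h * alpha g h) *g (g * h)%g >>.

Notation "x *[ alpha ] y" := (twisted_mul alpha x y)
  (at level 40, left associativity, format "x  *[ alpha ]  y") : ring_scope.

(* Main.v *)
Require Import Defs.
From HB Require Import structures.
From mathcomp Require Import all_boot all_order all_algebra.
From mathcomp Require Import monoid.
From mathcomp Require Import finmap.
From mathcomp.multinomials Require Import monalg.
From mathcomp Require Import ring.

Set Implicit Arguments.
Unset Strict Implicit.
Unset Printing Implicit Defensive.

Import GRing.Theory.
Local Open Scope ring_scope.


Section TM.
Variables (K : comNzRingType) (G : groupType) (alpha : G -> G -> K).
Hypothesis Halpha : is_2cocycle alpha.
Local Notation tm := (twisted_mul alpha).

Lemma tmlw (d1 d2 : {fset G}) (x y : {malg K[G]}) :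
  (msupp x `<=` d1)%fset -> (msupp y `<=` d2)%fset ->
  tm x y = \sum_(g <- d1) \sum_(h <- d2)
     << (x@_g * y@_h * alpha g h) *g (g * h)%g >>.
Proof.
move=> le_d1 le_d2; rewrite /twisted_mul (big_fset_incl _ le_d1) /=.
  apply/eq_bigr=> k1 _; apply/big_fset_incl => // k _ /mcoeff_outdom ->.
  by rewrite mulr0 mul0r monalgU0.
move=> k _ /mcoeff_outdom g1k.
by rewrite big1 => // k' _; rewrite g1k !mul0r monalgU0.
Qed.

Lemma tm0l x : tm 0 x = 0.
Proof. by rewrite /twisted_mul msupp0 big_seq_fset0. Qed.

Lemma tm0r x : tm x 0 = 0.
Proof. by rewrite /twisted_mul; apply: big1 => g _; rewrite msupp0 big_seq_fset0. Qed.

Lemma tmDl x y s : tm (x + y) s = tm x s + tm y s.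
Proof.
rewrite [in RHS](@tmlw (msupp x `|` msupp y)%fset (msupp s)) ?fsubsetUl //.
rewrite [in RHS](@tmlw (msupp x `|` msupp y)%fset (msupp s)) ?fsubsetUr //.
rewrite (@tmlw (msupp x `|` msupp y)%fset (msupp s)) ?msuppD_le //.
rewrite -big_split /=; apply/eq_bigr=> k1 _.
rewrite -big_split /=; apply/eq_bigr=> k2 _.
by rewrite mcoeffD !mulrDl monalgUD.
Qed.

Lemma tmDr s x y : tm s (x + y) = tm s x + tm s y.
Proof.
rewrite [in RHS](@tmlw (msupp s) (msupp x `|` msupp y)%fset) ?fsubsetUl //.
rewrite [in RHS](@tmlw (msupp s) (msupp x `|` msupp y)%fset) ?fsubsetUr //.
rewrite (@tmlw (msupp s) (msupp x `|` msupp y)%fset) ?msuppD_le //.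
rewrite -big_split /=; apply/eq_bigr=> k1 _.
rewrite -big_split /=; apply/eq_bigr=> k2 _.
by rewrite mcoeffD mulrDr mulrDl monalgUD.
Qed.

Lemma tmNl x s : tm (- x) s = - tm x s.
Proof. by apply/eqP; rewrite -subr_eq0 opprK -tmDl addNr tm0l. Qed.
Lemma tmNr s x : tm s (- x) = - tm s x.
Proof. by apply/eqP; rewrite -subr_eq0 opprK -tmDr addNr tm0r. Qed.

Lemma tmMzl x s n : tm (x *~ n) s = tm x s *~ n.
Proof.
have Hn : forall m, tm (x *+ m) s = tm x s *+ m.
  by elim=> [|m IH]; rewrite ?tm0l // !mulrS tmDl IH.
by case: n => m; rewrite ?NegzE ?mulrNz ?tmNl /= Hn.
Qed.
Lemma tmMzr s x n : tm s (x *~ n) = tm s x *~ n.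
Proof.
have Hn : forall m, tm s (x *+ m) = tm s x *+ m.
  by elim=> [|m IH]; rewrite ?tm0r // !mulrS tmDr IH.
by case: n => m; rewrite ?NegzE ?mulrNz ?tmNr /= Hn.
Qed.

Lemma tm_suml I (r : seq I) (P : pred I) (F : I -> _) s :
  tm (\sum_(i <- r | P i) F i) s = \sum_(i <- r | P i) tm (F i) s.
Proof. exact: (big_morph (tm^~ s) (fun _ _ => tmDl _ _ _) (tm0l _)). Qed.
Lemma tm_sumr I (r : seq I) (P : pred I) (F : I -> _) s :
  tm s (\sum_(i <- r | P i) F i) = \sum_(i <- r | P i) tm s (F i).
Proof. exact: (big_morph (tm s) (fun _ _ => tmDr _ _ _) (tm0r _)). Qed.

Lemma tmUU c1 c2 k1 k2 :
  tm << c1 *g k1 >> << c2 *g k2 >> = << c1 * c2 * alpha k1 k2 *g (k1 * k2)%g >>.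
Proof. by rewrite (tmlw msuppU_le msuppU_le) !big_seq_fset1 !mcoeffUU. Qed.

Lemma tmA_UUU c1 c2 c3 k1 k2 k3 :
  tm << c1 *g k1 >> (tm << c2 *g k2 >> << c3 *g k3 >>) =
  tm (tm << c1 *g k1 >> << c2 *g k2 >>) << c3 *g k3 >>.
Proof.
case: Halpha => _ _ _ Hc.
rewrite !tmUU mulgA; congr << _ *g _ >>.
transitivity (c1 * c2 * c3 * (alpha k1 (k2 * k3)%g * alpha k2 k3)); first by ring.
by rewrite -Hc; ring.
Qed.

Lemma tmA_UU c1 c2 k1 k2 s :
  tm << c1 *g k1 >> (tm << c2 *g k2 >> s) =
  tm (tm << c1 *g k1 >> << c2 *g k2 >>) s.
Proof.
rewrite [s]monalgE (@tm_sumr _ _ _ _ << c2 *g k2 >>).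
rewrite (@tm_sumr _ _ _ _ << c1 *g k1 >>).
rewrite (@tm_sumr _ _ _ _ (tm << c1 *g k1 >> << c2 *g k2 >>)).
by apply: eq_bigr => k _; rewrite tmA_UUU.
Qed.

Lemma tmA_U c1 k1 y s :
  tm << c1 *g k1 >> (tm y s) = tm (tm << c1 *g k1 >> y) s.
Proof.
rewrite [y]monalgE (@tm_suml _ _ _ _ s) (@tm_sumr _ _ _ _ << c1 *g k1 >>).
rewrite (@tm_sumr _ _ _ _ << c1 *g k1 >>) (@tm_suml _ _ _ _ s).
by apply: eq_bigr => k _; rewrite tmA_UU.
Qed.

Lemma tmA x y s : tm x (tm y s) = tm (tm x y) s.
Proof.
rewrite [x]monalgE (@tm_suml _ _ _ _ (tm y s)) (@tm_suml _ _ _ _ y).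
rewrite (@tm_suml _ _ _ _ s).
by apply: eq_bigr => k _; rewrite tmA_U.
Qed.

End TM.

Theorem mainTheorem4 (K : finComNzRingType) (G : groupType)
    (alpha : G -> G -> K) (Halpha : is_2cocycle alpha)
    (T1 T2 : {pred {malg K[G]}})
    (HT1 : {in T1 &, forall x y, x *[alpha] y = y *[alpha] x})
    (star : {malg K[G]} -> {malg K[G]})
    (HT2 : {in T2 &, forall x y, x *[alpha] star y = y *[alpha] star x})
    (n1 n2 : nat) (L1 : 'I_n1 -> {malg K[G]}) (L2 : 'I_n2 -> {malg K[G]})
    (HL1 : forall i, L1 i \in T1) (HL2 : forall j, L2 j \in T2)
    (h a c b d : {malg K[G]})
    (Ha : a \in T1) (Hc : c \in T1) (Hb : b \in T2) (Hd : d \in T2)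
    (z : 'I_n1 -> 'I_n2 -> int)
    (Hz : a *[alpha] h *[alpha] b =
          \sum_(i < n1) \sum_(j < n2) (L1 i *[alpha] h *[alpha] L2 j) *~ z i j) :
  \sum_(i < n1) \sum_(j < n2)
      (L1 i *[alpha] (c *[alpha] h *[alpha] d) *[alpha] star (L2 j)) *~ z i j
  = c *[alpha] a *[alpha] h *[alpha] b *[alpha] star d.
Proof.
have A := tmA Halpha.
have -> : c *[alpha] a *[alpha] h *[alpha] b *[alpha] star d =
   twisted_mul alpha (twisted_mul alpha c (a *[alpha] h *[alpha] b)) (star d).
  by rewrite (A c (twisted_mul alpha a h) b) (A c a h).
rewrite Hz (@tm_sumr _ _ alpha _ _ _ _ c) (@tm_suml _ _ alpha _ _ _ _ (star d)).
apply: eq_bigr => i _.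
rewrite (@tm_sumr _ _ alpha _ _ _ _ c) (@tm_suml _ _ alpha _ _ _ _ (star d)).
apply: eq_bigr => j _.
move: (HL1 i) (HL2 j); move: (L1 i) (L2 j) => l r Hl Hr.
pose tm := twisted_mul alpha.
pose M := tm (tm c l) h.
have s1 : tm l (tm (tm c h) d) = tm M d :=
  etrans (A l (tm c h) d) (congr1 (tm^~ d) (etrans (A l c h) (congr1 (tm^~ h) (HT1 l c Hl Hc)))).
have E : tm (tm l (tm (tm c h) d)) (star r) = tm (tm M r) (star d) :=
  etrans (congr1 (tm^~ (star r)) s1)
   (etrans (esym (A M d (star r))) (etrans (congr1 (tm M) (HT2 d r Hd Hr)) (A M r (star d)))).
have E' : tm c (tm (tm l h) r) = tm M r :=
  etrans (A c (tm l h) r) (congr1 (tm^~ r) (A c l h)).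
apply: etrans (congr1 (fun u => u *~ z i j) E) _.
symmetry.
apply: etrans (congr1 (tm^~ (star d)) (tmMzr _ _ _ _)) _.
apply: etrans (tmMzl _ _ _ _) _.
exact: (congr1 (fun u => tm u (star d) *~ z i j) E').
Qed.
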